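(* There exist private information distinguishing debate games $B=(A,S,P,C_w,C_l)$ and $B'=(A,S,P,C'_w,C'_l)$ with $C'_w(s)\supseteq C_w(s)$ and $C'_l(s)\subseteq C_l(s)$ for all $s\in S$ such that the minimum possible error of a policy for $B'$ exceeds the minimum possible error of a policy for $B$.
   Context: Let $\delta$ be a special default action. A PIDDG is a tuple $(A,S,P,C_w,C_l)$ with $A$ finite, $\delta\notin A$, $S$ finite, $P$ a probability mass function on $S$, and $C_w,C_l:S\to\mathcal P(A)$. A policy is $M:\{1,2\}\times(A\cup\{\delta\})^2\to[0,1]$ with $M(1,a_1,a_2)+M(2,a_1,a_2)=1$. $G_1(B,M)$ is the following Bayesian game with agents $1,2$. Each agent has action set $A\cup\{\delta\}$ and type set $\mathcal P(A)$. A scenario $s\sim P$ is drawn, and agent 1 gets type $C_w(s)$ while agent 2 gets type $C_l(s)$. Payoffs are as follows: - if both agents play available actions ($a_i\in t_i\cup\{\delta\}$), agent $i$ gets $M(i,a_1,a_2)$; - if exactly one plays an unavailable action, it gets $0$ and the other gets $1$; - if both play unavailable actions, each gets $1/2$. $G_2(B,M)$ is the same with the types swapped (agent 1 gets $C_l(s)$, agent 2 gets $C_w(s)$). The error is $\frac{v_1(G_2(B,M))+v_2(G_1(B,M))}{2}$, where $v_i$ denotes the value of the zero-sum Bayesian game to agent $i$. A policy of minimum error always exists. *)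

(* Defs.v *)
From mathcomp Require Import all_boot all_order all_algebra.
From mathcomp Require Import classical_sets reals.
Set Implicit Arguments. Unset Strict Implicit. Unset Printing Implicit Defensive.
Import Order.TTheory GRing.Theory Num.Theory.
Local Open Scope ring_scope.
Local Open Scope classical_set_scope.

(* Conventions: the default action delta is [None : option A]; the action set
   of each agent is [option A] = A ∪ {delta}.  Types are subsets [{set A}].
   Agent 1 is [true], agent 2 is [false]. *)

Section PIDDG.
Variable R : realType.
Variables (A S : finType).

Definition is_pmf (T : finType) (p : T -> R) : Prop :=
  (forall x, 0 <= p x) /\ \sum_(x : T) p x = 1.

Definition is_policy (M : bool -> option A -> option A -> R) : Prop :=
  (forall i a1 a2, 0 <= M i a1 a2 <= 1) /\
  (forall a1 a2, M true a1 a2 + M false a1 a2 = 1).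

Definition avail (t : {set A}) (a : option A) : bool :=
  if a is Some x then x \in t else true.

Definition payoff (M : bool -> option A -> option A -> R) (i : bool)
  (t1 t2 : {set A}) (a1 a2 : option A) : R :=
  match avail t1 a1, avail t2 a2 with
  | true, true => M i a1 a2
  | false, true => if i then 0 else 1
  | true, false => if i then 1 else 0
  | false, false => 1 / 2
  end.

Definition is_strategy (sigma : {set A} -> option A -> R) : Prop :=
  forall t, is_pmf (sigma t).

Definition exp_payoff (P : S -> R) (T1 T2 : S -> {set A})
  (M : bool -> option A -> option A -> R) (i : bool)
  (sigma1 sigma2 : {set A} -> option A -> R) : R :=
  \sum_(s : S) P s * \sum_(a1 : option A) \sum_(a2 : option A)
     sigma1 (T1 s) a1 * sigma2 (T2 s) a2 * payoff M i (T1 s) (T2 s) a1 a2.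

Definition value1 P T1 T2 M : R :=
  sup [set v | exists sigma1, is_strategy sigma1 /\
     v = inf [set w | exists sigma2, is_strategy sigma2 /\
                 w = exp_payoff P T1 T2 M true sigma1 sigma2]].

Definition value2 P T1 T2 M : R :=
  sup [set v | exists sigma2, is_strategy sigma2 /\
     v = inf [set w | exists sigma1, is_strategy sigma1 /\
                 w = exp_payoff P T1 T2 M false sigma1 sigma2]].

(* error of policy M for B = (A,S,P,Cw,Cl):
   (v_1(G_2(B,M)) + v_2(G_1(B,M)))/2, where in G_1 agent 1 gets Cw(s) and
   agent 2 gets Cl(s), and in G_2 the types are swapped. *)
Definition error (P : S -> R) (Cw Cl : S -> {set A})
  (M : bool -> option A -> option A -> R) : R :=
  (value1 P Cl Cw M + value2 P Cw Cl M) / 2.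

Definition is_min_error (P : S -> R) (Cw Cl : S -> {set A}) (e : R) : Prop :=
  (exists M, is_policy M /\ error P Cw Cl M = e) /\
  (forall M, is_policy M -> e <= error P Cw Cl M).

End PIDDG.

(* Main.v *)
Require Import Defs.
From mathcomp Require Import all_boot all_order all_algebra.
From mathcomp Require Import classical_sets reals.
From mathcomp Require Import lra.
Import Order.TTheory GRing.Theory Num.Theory.
Local Open Scope ring_scope.
Local Open Scope classical_set_scope.
Set Implicit Arguments. Unset Strict Implicit.

Definition pt {R : realType} {A : finType} (y : option A) : option A -> R :=
  fun a => if a == y then 1 else 0.

Lemma sum_pt_mul (R : realType) (A : finType) (y : option A) (g : option A -> R) :
  \sum_(a : option A) pt y a * g a = g y.
Proof.
rewrite (bigD1 y) //= big1 ?addr0; first by rewrite /pt eqxx mul1r.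
by move=> a /negbTE ha; rewrite /pt ha mul0r.
Qed.

Lemma pt_strat (R : realType) (A : finType) (h : {set A} -> option A) :
  is_strategy (fun t => @pt R A (h t)).
Proof.
move=> t; split; first by move=> x; rewrite /pt; case: ifP.
rewrite -[RHS](sum_pt_mul (h t) (fun _ => 1)).
by apply: eq_bigr => a _; rewrite mulr1.
Qed.

Lemma payoff_bnd (R : realType) (A : finType) (M : bool -> option A -> option A -> R)
  i t1 t2 a1 a2 : is_policy M -> 0 <= payoff M i t1 t2 a1 a2 <= 1.
Proof.
case=> hM _; rewrite /payoff.
case: (avail t1 a1); case: (avail t2 a2); try case: i => //=; try exact: hM;
 rewrite ?ler01 ?lexx //; lra.
Qed.

Lemma sum_prod1 (R : realType) (A : finType) (s1 s2 : option A -> R) :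
  is_pmf s1 -> is_pmf s2 -> \sum_a1 \sum_a2 s1 a1 * s2 a2 = 1.
Proof.
move=> [_ h1] [_ h2].
under eq_bigr do rewrite -mulr_sumr h2 mulr1.
exact: h1.
Qed.

Lemma exp_bnd (R : realType) (A S : finType) (P : S -> R) T1 T2
  (M : bool -> option A -> option A -> R) i s1 s2 :
  is_pmf P -> is_policy M -> is_strategy s1 -> is_strategy s2 ->
  0 <= exp_payoff P T1 T2 M i s1 s2 <= 1.
Proof.
move=> [P0 P1] hM h1 h2; rewrite /exp_payoff; apply/andP; split.
  apply: sumr_ge0 => s _; apply: mulr_ge0 => //.
  apply: sumr_ge0 => a1 _; apply: sumr_ge0 => a2 _.
  apply: mulr_ge0; last by case/andP: (payoff_bnd i (T1 s) (T2 s) a1 a2 hM).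
  by apply: mulr_ge0; [case: (h1 (T1 s)) | case: (h2 (T2 s))].
rewrite -[leRHS]P1; apply: ler_sum => s _.
rewrite -[leRHS]mulr1; apply: ler_wpM2l => //.
rewrite -(sum_prod1 (h1 (T1 s)) (h2 (T2 s))).
apply: ler_sum => a1 _; apply: ler_sum => a2 _.
rewrite -[leRHS]mulr1; apply: ler_wpM2l.
  by apply: mulr_ge0; [case: (h1 (T1 s)) | case: (h2 (T2 s))].
by case/andP: (payoff_bnd i (T1 s) (T2 s) a1 a2 hM).
Qed.


Lemma value1_ge (R : realType) (A S : finType) (P : S -> R) T1 T2
  (M : bool -> option A -> option A -> R) (c : R) :
  is_pmf P -> is_policy M ->
  (exists s1, is_strategy s1 /\ forall s2, is_strategy s2 ->
     c <= exp_payoff P T1 T2 M true s1 s2) ->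
  c <= value1 P T1 T2 M.
Proof.
move=> hP hM [s1 [hs1 hc]].
have hs0 := pt_strat R (fun _ : {set A} => None).
set W := fun s1 => [set w | exists sigma2, is_strategy sigma2 /\
                 w = exp_payoff P T1 T2 M true s1 sigma2].
have Wne s : W s !=set0 by exists (exp_payoff P T1 T2 M true s (fun t => pt None)); exists (fun t => pt None).
have Wlb s : is_strategy s -> lbound (W s) 0.
  move=> hs w [s2 [hs2 ->]]; by case/andP: (exp_bnd T1 T2 true hP hM hs hs2).
have cle : c <= inf (W s1).
  by apply: lb_le_inf => // w [s2 [hs2 ->]]; exact: hc.
apply: (le_trans cle); rewrite /value1.
apply: sup_upper_bound; last by exists s1.
split; first by exists (inf (W s1)); exists s1.
exists 1 => v [s [hs ->]].
have [w Ww] := Wne s.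
apply: (le_trans (ge_inf _ Ww)); first by exists 0; exact: Wlb.
by case: Ww => s2 [hs2 ->]; case/andP: (exp_bnd T1 T2 true hP hM hs hs2).
Qed.

Lemma value1_le (R : realType) (A S : finType) (P : S -> R) T1 T2
  (M : bool -> option A -> option A -> R) (c : R) :
  is_pmf P -> is_policy M ->
  (forall s1, is_strategy s1 -> exists s2, is_strategy s2 /\ (exp_payoff P T1 T2 M true s1 s2 <= c)) ->
  value1 P T1 T2 M <= c.
Proof.
move=> hP hM hc.
have hs0 := pt_strat R (fun _ : {set A} => None).
apply: ge_sup.
  by exists (inf [set w | exists sigma2, is_strategy sigma2 /\ w = exp_payoff P T1 T2 M true (fun t => pt None) sigma2]); exists (fun t => pt None).
move=> v [s1 [hs1 ->]].
have [s2 [hs2 hle]] := hc s1 hs1.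
apply: le_trans hle; apply: ge_inf; last by exists s2.
exists 0 => w [s [hs ->]]; by case/andP: (exp_bnd T1 T2 true hP hM hs1 hs).
Qed.

Lemma value2_ge (R : realType) (A S : finType) (P : S -> R) T1 T2
  (M : bool -> option A -> option A -> R) (c : R) :
  is_pmf P -> is_policy M ->
  (exists s2, is_strategy s2 /\ forall s1, is_strategy s1 ->
     c <= exp_payoff P T1 T2 M false s1 s2) ->
  c <= value2 P T1 T2 M.
Proof.
move=> hP hM [s2 [hs2 hc]].
set W := fun s2 => [set w | exists sigma1, is_strategy sigma1 /\ w = exp_payoff P T1 T2 M false sigma1 s2].
have Wne s : W s !=set0 by exists (exp_payoff P T1 T2 M false (fun t => pt None) s); exists (fun t => pt None); split => //; exact: pt_strat.
have Wlb s : is_strategy s -> lbound (W s) 0.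
  move=> hs w [s1 [hs1 ->]]; by case/andP: (exp_bnd T1 T2 false hP hM hs1 hs).
have cle : c <= inf (W s2).
  by apply: lb_le_inf => // w [s1 [hs1 ->]]; exact: hc.
apply: (le_trans cle); rewrite /value2.
apply: sup_upper_bound; last by exists s2.
split; first by exists (inf (W s2)); exists s2.
exists 1 => v [s [hs ->]].
have [w Ww] := Wne s.
apply: (le_trans (ge_inf _ Ww)); first by exists 0; exact: Wlb.
by case: Ww => s1 [hs1 ->]; case/andP: (exp_bnd T1 T2 false hP hM hs1 hs).
Qed.

Lemma value2_le (R : realType) (A S : finType) (P : S -> R) T1 T2
  (M : bool -> option A -> option A -> R) (c : R) :
  is_pmf P -> is_policy M ->
  (forall s2, is_strategy s2 -> exists s1, is_strategy s1 /\ (exp_payoff P T1 T2 M false s1 s2 <= c)) ->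
  value2 P T1 T2 M <= c.
Proof.
move=> hP hM hc.
have hs0 := pt_strat R (fun _ : {set A} => None).
apply: ge_sup.
  by exists (inf [set w | exists sigma1, is_strategy sigma1 /\ w = exp_payoff P T1 T2 M false sigma1 (fun t => pt None)]); exists (fun t => pt None).
move=> v [s2 [hs2 ->]].
have [s1 [hs1 hle]] := hc s2 hs2.
apply: le_trans hle; apply: ge_inf; last by exists s1.
exists 0 => w [s [hs ->]]; by case/andP: (exp_bnd T1 T2 false hP hM hs hs2).
Qed.

Lemma exp_pt1 (R : realType) (A S : finType) (P : S -> R) T1 T2
  (M : bool -> option A -> option A -> R) i h s2 :
  exp_payoff P T1 T2 M i (fun t => pt (h t)) s2 =
  \sum_s P s * \sum_a2 s2 (T2 s) a2 * payoff M i (T1 s) (T2 s) (h (T1 s)) a2.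
Proof.
apply: eq_bigr => s _; congr (_ * _).
rewrite -(sum_pt_mul (h (T1 s)) (fun a1 => \sum_a2 s2 (T2 s) a2 * payoff M i (T1 s) (T2 s) a1 a2)).
apply: eq_bigr => a1 _; under eq_bigr do rewrite -mulrA; by rewrite -mulr_sumr.
Qed.

Lemma exp_pt2 (R : realType) (A S : finType) (P : S -> R) T1 T2
  (M : bool -> option A -> option A -> R) i h s1 :
  exp_payoff P T1 T2 M i s1 (fun t => pt (h t)) =
  \sum_s P s * \sum_a1 s1 (T1 s) a1 * payoff M i (T1 s) (T2 s) a1 (h (T2 s)).
Proof.
apply: eq_bigr => s _; congr (_ * _).
apply: eq_bigr => a1 _.
rewrite -(sum_pt_mul (h (T2 s)) (fun a2 => s1 (T1 s) a1 * payoff M i (T1 s) (T2 s) a1 a2)).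
by apply: eq_bigr => a2 _; rewrite [RHS]mulrCA mulrA.
Qed.

Lemma sum_le_c (R : realType) (A S : finType) (P : S -> R) (q : S -> option A -> R)
  (g : S -> option A -> R) (c : S -> R) :
  is_pmf P -> (forall s, is_pmf (q s)) -> (forall s a, g s a <= c s) ->
  \sum_s P s * \sum_a q s a * g s a <= \sum_s P s * c s.
Proof.
move=> [P0 _] hq hg; apply: ler_sum => s _; apply: ler_wpM2l => //.
case: (hq s) => q0 q1; rewrite -[leRHS]mul1r -q1 mulr_suml.
by apply: ler_sum => a _; apply: ler_wpM2l.
Qed.


Local Close Scope classical_set_scope.

Lemma exists_min (R : realType) (T : finType) (x0 : T) (F : T -> R) :
  exists x, forall z, F x <= F z.
Proof. by case: (@arg_minP _ R T x0 xpredT F isT) => x _ h; exists x => z; exact: h. Qed.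

Definition ia : 'I_3 := @Ordinal 3 0 isT.
Definition ib : 'I_3 := @Ordinal 3 1 isT.
Definition ic : 'I_3 := @Ordinal 3 2 isT.

Definition Cl (s : 'I_4) : {set 'I_3} :=
  match val s with 0 => [set x : 'I_3 | false] | 1 => [set ib] | 2 => [set ic] | _ => [set ia] end.
Definition Cw (s : 'I_4) : {set 'I_3} :=
  match val s with 0 | 1 => [set ia] | 2 => [set ib] | _ => [set ic] end.
Definition fs (t : {set 'I_3}) : option 'I_3 :=
  if ia \in t then Some ia else if ib \in t then Some ib
  else if ic \in t then Some ic else None.
Definition ys (s : 'I_4) : option 'I_3 :=
  match val s with 0 => None | 1 => Some ib | 2 => Some ic | _ => Some ia end.

Lemma fCl s : fs (Cl s) = ys s.
Proof. by case: s => [[|[|[|[|k]]]] Hs] //=; rewrite /fs !inE. Qed.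

Lemma ys_avail s : avail (Cl s) (ys s).
Proof. by case: s => [[|[|[|[|k]]]] Hs] //=; rewrite !inE. Qed.

Lemma ys_surj x : exists s, ys s = x.
Proof.
case: x => [[[|[|[|k]]] Hx]|] //.
- by exists (@Ordinal 4 3 isT); congr Some; apply: val_inj.
- by exists (@Ordinal 4 1 isT); congr Some; apply: val_inj.
- by exists (@Ordinal 4 2 isT); congr Some; apply: val_inj.
- by exists (@Ordinal 4 0 isT).
Qed.

Definition win (x y : option 'I_3) : bool :=
  match x, y with
  | Some u, Some v => (val v == (val u).+1 %% 3)%N
  | Some _, None => true
  | _, _ => false end.

Definition MB (R : realType) (i : bool) (x y : option 'I_3) : R :=
  let m : R := if win x y then 1 else if win y x then 0 else 1/2 in
  if i then m else 1 - m.

Definition MP (R : realType) (i : bool) (x y : option 'I_3) : R :=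
  let m : R := if x == Some ia then 1 else 0 in
  if i then m else 1 - m.

Definition Pu (R : realType) (s : 'I_4) : R := 1/4.

Lemma Pu_pmf (R : realType) : is_pmf (@Pu R).
Proof.
split; first by move=> x; rewrite /Pu; lra.
rewrite /Pu sumr_const card_ord -mulr_natr; lra.
Qed.

Lemma MB_pol (R : realType) : is_policy (@MB R).
Proof.
split; last by move=> a1 a2; rewrite /MB; lra.
move=> i a1 a2; rewrite /MB; case: i; case: ifP => _; try case: ifP => _; apply/andP; split; lra.
Qed.

Lemma MP_pol (R : realType) : is_policy (@MP R).
Proof.
split; last by move=> a1 a2; rewrite /MP; lra.
move=> i a1 a2; rewrite /MP; case: i; case: ifP => _; apply/andP; split; lra.
Qed.

Definition Tall : {set 'I_3} := [set x : 'I_3 | true].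

Lemma B_v1 (R : realType) : value1 (@Pu R) Cl Cw (@MB R) <= 0.
Proof.
apply: value1_le (Pu_pmf R) (MB_pol R) _ => s1 hs1.
exists (fun t => pt (fs t)); split; first exact: pt_strat.
rewrite exp_pt2.
apply: le_trans (sum_le_c (c := fun _ => 0) (Pu_pmf R) (fun s => hs1 (Cl s)) _) _.
  move=> s a.
  case: s => [[|[|[|[|k]]]] Hs] //; case: a => [[[|[|[|k']]] Ha]|] //;
    rewrite /payoff /MB /fs /Cw /Cl /= ?inE /= ?inE /= ?inE /=; lra.
by rewrite big1 // => s _; rewrite mulr0.
Qed.

Lemma B_v2 (R : realType) : value2 (@Pu R) Cw Cl (@MB R) <= 0.
Proof.
apply: value2_le (Pu_pmf R) (MB_pol R) _ => s2 hs2.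
exists (fun t => pt (fs t)); split; first exact: pt_strat.
rewrite exp_pt1.
apply: le_trans (sum_le_c (c := fun _ => 0) (Pu_pmf R) (fun s => hs2 (Cl s)) _) _.
  move=> s a.
  case: s => [[|[|[|[|k]]]] Hs] //; case: a => [[[|[|[|k']]] Ha]|] //;
    rewrite /payoff /MB /fs /Cw /Cl /= ?inE /= ?inE /= ?inE /=; lra.
by rewrite big1 // => s _; rewrite mulr0.
Qed.

Lemma Bp_v1 (R : realType) : value1 (@Pu R) Cl (fun _ => Tall) (@MP R) <= 1/4.
Proof.
apply: value1_le (Pu_pmf R) (MP_pol R) _ => s1 hs1.
exists (fun t => pt ((fun _ : {set 'I_3} => Some ib) t)); split; first exact: pt_strat.
rewrite exp_pt2.
apply: le_trans (sum_le_c (c := fun s : 'I_4 => if val s == 3 then 1 else 0) (Pu_pmf R) (fun s => hs1 (Cl s)) _) _.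
  move=> s a.
  case: s => [[|[|[|[|k]]]] Hs] //; case: a => [[[|[|[|k']]] Ha]|] //;
    rewrite /payoff /MP /Cl /Tall /= ?inE /= ?inE /= ?inE /=; lra.
rewrite !big_ord_recr big_ord0 /= /Pu; lra.
Qed.

Lemma Bp_v2 (R : realType) : value2 (@Pu R) (fun _ => Tall) Cl (@MP R) <= 0.
Proof.
apply: value2_le (Pu_pmf R) (MP_pol R) _ => s2 hs2.
exists (fun t => pt ((fun _ : {set 'I_3} => Some ia) t)); split; first exact: pt_strat.
rewrite exp_pt1.
apply: le_trans (sum_le_c (c := fun _ => 0) (Pu_pmf R) (fun s => hs2 (Cl s)) _) _.
  move=> s a.
  case: s => [[|[|[|[|k]]]] Hs] //; case: a => [[[|[|[|k']]] Ha]|] //;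
    rewrite /payoff /MP /Cl /Tall /= ?inE /= ?inE /= ?inE /=; lra.
by rewrite big1 // => s _; rewrite mulr0.
Qed.

Lemma payoff_tt (R : realType) (A : finType) (M : bool -> option A -> option A -> R) i t1 t2 a1 a2 :
  avail t1 a1 -> avail t2 a2 -> payoff M i t1 t2 a1 a2 = M i a1 a2.
Proof. by rewrite /payoff => -> ->. Qed.

Lemma avail_Tall a : avail Tall a.
Proof. by case: a => //= x; rewrite inE. Qed.

Lemma mix_ge (R : realType) (A S : finType) (P : S -> R) (q : option A -> R)
  (g : S -> option A -> R) (c : R) :
  is_pmf q -> (forall a, c <= \sum_s P s * g s a) ->
  c <= \sum_s P s * \sum_a q a * g s a.
Proof.
move=> [q0 q1] hc.
have -> : \sum_s P s * \sum_a q a * g s a = \sum_a q a * \sum_s P s * g s a.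
  under eq_bigr do rewrite big_distrr /=.
  rewrite exchange_big /=; apply: eq_bigr => a _.
  rewrite big_distrr /=; apply: eq_bigr => s _; by rewrite mulrCA.
rewrite -[c]mul1r -q1 big_distrl /=; apply: ler_sum => a _.
by apply: ler_wpM2l.
Qed.

Lemma pair_ge (R : realType) (S A : finType) (M : bool -> option A -> option A -> R) (y : S -> option A) x x' :
  is_policy M -> (forall z, exists s, y s = z) ->
  1 <= \sum_s (M false x (y s) + M true (y s) x').
Proof.
move=> [hb hs] hy.
have h0 : forall i u v, 0 <= M i u v by move=> i u v; case/andP: (hb i u v).
have hr : forall s, 0 <= M false x (y s) + M true (y s) x' by move=> s; apply: addr_ge0.
have [s1 e1] := hy x'; have [s2 e2] := hy x.
rewrite (bigD1 s1) //=.
have hrest : forall P, 0 <= \sum_(s | P s) (M false x (y s) + M true (y s) x').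
  by move=> P; apply: sumr_ge0 => s _; exact: hr.
case: (eqVneq s2 s1) => [e|ne].
  subst s2; have ex : x' = x by rewrite -e1 e2.
  set T := \sum_(i | _) _; have : 0 <= T by apply: sumr_ge0 => *; exact: hr.
  rewrite e2 ex; have := hs x x; lra.
rewrite (bigD1 s2) /=; last by rewrite ne.
have := hs x x'; have := h0 true x' x'; have := h0 false x x.
set T := \sum_(i | _) _; have : 0 <= T by apply: sumr_ge0 => *; exact: hr.
rewrite e1 e2; lra.
Qed.

Lemma LBp (R : realType) (M : bool -> option 'I_3 -> option 'I_3 -> R) :
  is_policy M -> 1/8 <= error (@Pu R) (fun _ => Tall) Cl M.
Proof.
move=> hM.
pose F x := \sum_s (@Pu R) s * M false x (ys s).
pose G x := \sum_s (@Pu R) s * M true (ys s) x.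
have [x0 hx0] := exists_min None F.
have [x1 hx1] := exists_min None G.
have h2 : F x0 <= value2 (@Pu R) (fun _ => Tall) Cl M.
  apply: value2_ge (Pu_pmf R) hM _.
  exists (fun t => pt (fs t)); split; first exact: pt_strat.
  move=> s1 hs1; rewrite exp_pt2 /=.
  under eq_bigr do under eq_bigr do rewrite fCl payoff_tt ?avail_Tall ?ys_avail //.
  by apply: mix_ge (hs1 Tall) _ => a; exact: hx0.
have h1 : G x1 <= value1 (@Pu R) Cl (fun _ => Tall) M.
  apply: value1_ge (Pu_pmf R) hM _.
  exists (fun t => pt (fs t)); split; first exact: pt_strat.
  move=> s2 hs2; rewrite exp_pt1 /=.
  under eq_bigr do under eq_bigr do rewrite fCl payoff_tt ?avail_Tall ?ys_avail //.
  by apply: mix_ge (hs2 Tall) _ => a; exact: hx1.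
have hp : 1/4 <= F x0 + G x1.
  rewrite /F /G -big_split /=.
  under eq_bigr do rewrite -mulrDr.
  rewrite -big_distrr /= /Pu.
  have := pair_ge x0 x1 hM ys_surj; lra.
rewrite /error; lra.
Qed.

Unset Implicit Arguments. Set Strict Implicit.

Lemma error_ge0 (R : realType) (A S : finType) (P : S -> R) T1 T2
  (M : bool -> option A -> option A -> R) :
  is_pmf P -> is_policy M -> 0 <= error P T1 T2 M.
Proof.
move=> hP hM.
have h1 : 0 <= value1 P T2 T1 M.
  apply: (value1_ge hP hM); exists (fun t => pt ((fun _ : {set A} => None) t)); split; first exact: pt_strat.
  by move=> s2 hs2; have /andP[] := exp_bnd T2 T1 true hP hM (pt_strat R (fun _ : {set A} => None)) hs2.
have h2 : 0 <= value2 P T1 T2 M.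
  apply: (value2_ge hP hM); exists (fun t => pt ((fun _ : {set A} => None) t)); split; first exact: pt_strat.
  by move=> s1 hs1; have /andP[] := exp_bnd T1 T2 false hP hM hs1 (pt_strat R (fun _ : {set A} => None)).
rewrite /error; lra.
Qed.

Theorem proposition3p5 (R : realType) :
  exists (A S : finType) (P : S -> R) (Cw Cl Cw' Cl' : S -> {set A}),
    is_pmf P /\
    (forall s, Cw s \subset Cw' s) /\
    (forall s, Cl' s \subset Cl s) /\
    exists e e' : R,
      is_min_error P Cw Cl e /\ is_min_error P Cw' Cl' e' /\ e < e'.
Proof.
exists 'I_3, 'I_4, (@Pu R), Cw, Cl, (fun _ => Tall), Cl.
split; first exact: Pu_pmf.
split; first by move=> s; apply/fintype.subsetP => x _; rewrite inE.
split; first by move=> s; exact: subxx.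
exists 0, (1/8); split; [|split; last lra].
- split; last by move=> M hM; exact: error_ge0 (Pu_pmf R) hM.
  exists (@MB R); split; first exact: MB_pol.
  apply/eqP; rewrite eq_le error_ge0 ?andbT //; [|exact: Pu_pmf|exact: MB_pol].
  have := B_v1 R; have := B_v2 R; rewrite /error; lra.
- split; last by move=> M hM; exact: LBp.
  exists (@MP R); split; first exact: MP_pol.
  apply/eqP; rewrite eq_le LBp ?andbT; last exact: MP_pol.
  have := Bp_v1 R; have := Bp_v2 R; rewrite /error; lra.
Qed.
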